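(* Let $k\ge2$ and let $f$ be a smooth function on $\mathcal E_k$ (depending on finitely many coordinates) such that $D^{(k)}_x(f)=D^{(k)}_y(f)=0$. Then $f$ is constant.
   Context: Let $\mathcal E_1$ be the system $u_y+vu_x=\frac1{v-u}$, $v_y+uv_x=\frac1{u-v}$ with internal coordinates $x,y,u_i=\partial^iu/\partial x^i$, $v_i=\partial^iv/\partial x^i$ ($i\ge0$) and total derivatives $D_x=\partial_x+\sum_i(u_{i+1}\partial_{u_i}+v_{i+1}\partial_{v_i})$, $D_y=\partial_y+\sum_i\big(D_x^i(\tfrac1{v-u}-vu_1)\partial_{u_i}+D_x^i(\tfrac1{u-v}-uv_1)\partial_{v_i}\big)$. Let $\sigma_m=\sum_{i+j=m}u^iv^j$, $\psi^{(1)}=y$, $\psi^{(2)}=x$, and let $\psi^{(k)}$, $k\ge3$, be new coordinates; for $k\ge2$ put $X^{(k)}=\sigma_{k-2}-\sum_{i=1}^{k-3}i\,\sigma_{k-i-3}\psi^{(i)}$ and for $k\ge3$ put $Y^{(k)}=-uv\,X^{(k-1)}-(k-2)\psi^{(k-2)}$. For $k\ge2$, $\mathcal E_k=\mathcal E_1\times\mathbb R^{k-1}$ has the additional coordinates $\psi^{(3)},\dots,\psi^{(k+1)}$ and the commuting vector fields $D^{(k)}_x=D_x+\sum_{i=3}^{k+1}X^{(i)}\partial/\partial\psi^{(i)}$, $D^{(k)}_y=D_y+\sum_{i=3}^{k+1}Y^{(i)}\partial/\partial\psi^{(i)}$. *)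

(* Defs.v *)
From HB Require Import structures.
From mathcomp Require Import all_boot all_order all_algebra.
From mathcomp Require Import all_classical all_reals all_analysis.
Set Implicit Arguments. Unset Strict Implicit. Unset Printing Implicit Defensive.
Import Order.TTheory GRing.Theory Num.Theory.
Import numFieldNormedType.Exports.
Local Open Scope classical_set_scope.
Local Open Scope ring_scope.

Section Jets.
Variable R : realType.

(* A point of the infinite-dimensional space E_1 x R^infty:
   internal coordinates x, y, u_i, v_i (i >= 0) and the nonlocal
   coordinates psi^(j), stored in jpsi j for j >= 3
   (jpsi j for j < 3 is an unused dummy). *)
Record jet := mkJet {
  jx : R; jy : R; ju : nat -> R; jv : nat -> R; jpsi : nat -> R }.

Definition jline (p w : jet) (t : R) : jet :=
  mkJet (jx p + t * jx w) (jy p + t * jy w)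
        (fun i => ju p i + t * ju w i) (fun i => jv p i + t * jv w i)
        (fun j => jpsi p j + t * jpsi w j).

Definition vfield (w : jet -> jet) (h : jet -> R) : jet -> R :=
  fun p => derive1 (fun t => h (jline p (w p) t)) 0.

Definition psi (p : jet) (j : nat) : R :=
  if j == 1%N then jy p else if j == 2%N then jx p else jpsi p j.

Definition sigma (p : jet) (m : nat) : R :=
  \sum_(0 <= i < m.+1) ju p 0 ^+ i * jv p 0 ^+ (m - i).

Definition Xc (k : nat) (p : jet) : R :=
  sigma p (k - 2) - \sum_(1 <= i < k - 2) (i%:R * sigma p (k - i - 3) * psi p i).

Definition Yc (k : nat) (p : jet) : R :=
  - (ju p 0 * jv p 0) * Xc k.-1 p - (k - 2)%:R * psi p (k - 2).

Definition Wx1 (p : jet) : jet :=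
  mkJet 1 0 (fun i => ju p i.+1) (fun i => jv p i.+1) (fun _ => 0).
Definition Dx1 (h : jet -> R) : jet -> R := vfield Wx1 h.

(* right-hand sides of the system *)
Definition rhsU (p : jet) : R := 1 / (jv p 0 - ju p 0) - jv p 0 * ju p 1.
Definition rhsV (p : jet) : R := 1 / (ju p 0 - jv p 0) - ju p 0 * jv p 1.

Definition Fu (i : nat) : jet -> R := iter i Dx1 rhsU.
Definition Fv (i : nat) : jet -> R := iter i Dx1 rhsV.

Definition in_psi_range (k j : nat) : bool := (3 <= j <= k.+1)%N.

Definition Wxk (k : nat) (p : jet) : jet :=
  mkJet 1 0 (fun i => ju p i.+1) (fun i => jv p i.+1)
        (fun j => if in_psi_range k j then Xc j p else 0).
Definition Wyk (k : nat) (p : jet) : jet :=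
  mkJet 0 1 (fun i => Fu i p) (fun i => Fv i p)
        (fun j => if in_psi_range k j then Yc j p else 0).

Definition Dxk (k : nat) (h : jet -> R) : jet -> R := vfield (Wxk k) h.
Definition Dyk (k : nat) (h : jet -> R) : jet -> R := vfield (Wyk k) h.

(* the finitely many coordinates of E_k up to jet order N:
   x, y, u_0..u_N, v_0..v_N, psi^(3)..psi^(k+1) *)
Definition ncoord (k N : nat) : nat := (2 + N.+1 + N.+1 + k.-1)%N.

Definition coord (k N : nat) (p : jet) (i : nat) : R :=
  if i == 0%N then jx p
  else if i == 1%N then jy p
  else if (i < 2 + N.+1)%N then ju p (i - 2)
  else if (i < 2 + N.+1 + N.+1)%N then jv p (i - 2 - N.+1)
  else jpsi p (i - (2 + N.+1 + N.+1) + 3).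

Definition jproj (k N : nat) (p : jet) : 'rV[R]_(ncoord k N) :=
  \row_(i < ncoord k N) coord k N p i.

Definition u0_of (k N : nat) (z : 'rV[R]_(ncoord k N)) : R :=
  z ord0 (@inord (ncoord k N).-1 2).
Definition v0_of (k N : nat) (z : 'rV[R]_(ncoord k N)) : R :=
  z ord0 (@inord (ncoord k N).-1 (2 + N.+1)).

End Jets.

Fixpoint iterD {R : realType} {m : nat} (vs : seq 'rV[R]_m)
    (g : 'rV[R]_m -> R) : 'rV[R]_m -> R :=
  match vs with
  | [::] => g
  | v :: vs' => fun z => derive (iterD vs' g) z v
  end.

Definition smooth_on {R : realType} {m : nat} (U : set 'rV[R]_m)
    (g : 'rV[R]_m -> R) : Prop :=
  forall (vs : seq 'rV[R]_m) (z : 'rV[R]_m), U z -> differentiable (iterD vs g) z.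

Arguments jproj {R} k N p.
Arguments u0_of {R} k N z.
Arguments v0_of {R} k N z.
Arguments Dxk {R} k h.
Arguments Dyk {R} k h.

(* Main.v *)
Require Import Defs.
From HB Require Import structures.
From mathcomp Require Import all_boot all_order all_algebra.
From mathcomp Require Import all_classical all_reals all_analysis.
From mathcomp Require Import ring lra zify.
Import Order.TTheory GRing.Theory Num.Theory.
Import numFieldNormedType.Exports.
Local Open Scope classical_set_scope.
Local Open Scope ring_scope.
Set Implicit Arguments. Unset Strict Implicit.

Section Ana.
Variables (R : realType) (n : nat).
Local Notation V := 'rV[R]_n.

Lemma derive_line (g : V -> R) z e t :
  derive (fun s : R => g (z + s *: e)) t 1 = derive g (z + t *: e) e.
Proof.
rewrite /derive; suff -> : (fun h : R => h^-1 *: (((fun s : R => g (z + s *: e)) \o shift t) (h *: 1) - (fun s : R => g (z + s *: e)) t)) =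
  (fun h : R => h^-1 *: ((g \o shift (z + t *: e)) (h *: e) - g (z + t *: e))) by [].
apply: funext => h /=.
by rewrite /shift /= -[h%:A]/(h * 1) mulr1 scalerDl addrCA.
Qed.

Lemma derivable_line (g : V -> R) z e t :
  derivable (fun s : R => g (z + s *: e)) t 1 <-> derivable g (z + t *: e) e.
Proof.
rewrite /derivable; suff -> : (fun h : R => h^-1 *: (((fun s : R => g (z + s *: e)) \o shift t) (h *: 1) - (fun s : R => g (z + s *: e)) t)) =
  (fun h : R => h^-1 *: ((g \o shift (z + t *: e)) (h *: e) - g (z + t *: e))) by [].
apply: funext => h /=.
by rewrite /shift /= -[h%:A]/(h * 1) mulr1 scalerDl addrCA.
Qed.


Lemma seg_const (U : set V) (g : V -> R) z e :
  (forall y, U y -> differentiable g y) ->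
  (forall t, 0 <= t <= 1 -> U (z + t *: e)) ->
  (forall t, 0 <= t <= 1 -> 'd g (z + t *: e) e = 0) ->
  g (z + e) = g z.
Proof.
move=> dg hU hd.
set phi := fun s : R => g (z + s *: e).
have dphi t : 0 <= t <= 1 -> derivable phi t 1.
  by move=> /hU /dg /diff_derivable H; apply/derivable_line; exact: H.
have h1 : forall x : R, x \in `]0, 1[%R -> is_derive x (1:R) phi ((fun _ => 0 : R) x).
  move=> x; rewrite in_itv /= => /andP[x0 x1].
  have xI : 0 <= x <= 1 by rewrite !ltW.
  apply: DeriveDef; first exact: dphi.
  by rewrite /phi derive_line deriveE; [exact: hd | exact/dg/hU].
have h2 : {within `[0, 1], continuous phi}.
  apply: continuous_in_subspaceT => x; rewrite inE /= in_itv /= => xI.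
  exact/differentiable_continuous/derivable1_diffP/dphi.
have [c _] := @MVT_segment R phi (fun _ => 0) 0 1 ler01 h1 h2.
rewrite /phi mul0r scale1r scale0r addr0 => /eqP; rewrite subr_eq0 => /eqP.
  done.
Qed.

Lemma open_ball (U : set V) z : open U -> U z ->
  exists2 r : R, 0 < r & forall y, `|z - y| < r -> U y.
Proof.
move=> oU Uz; have : nbhs z U by apply: open_nbhs_nbhs; split.
move/nbhs_ballP => [r r0 H]; exists r => // y zy; apply: H.
by rewrite -ball_normE /=.
Qed.


Lemma loc_const (U : set V) (g : V -> R) e z : open U ->
  (forall y, U y -> differentiable g y) ->
  (forall y, U y -> 'd g y e = 0) -> U z ->
  exists2 d : R, 0 < d & forall s, `|s| < d ->
    U (z + s *: e) /\ forall w, 'd g (z + s *: e) w = 'd g z w.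
Proof.
move=> oU dg de Uz.
have [r r0 hr] := open_ball oU Uz.
have r20 : 0 < r / 2 by rewrite divr_gt0.
have key y s : `|z - y| < r / 2 -> `|s| * `|e| < r / 2 -> g (y + s *: e) = g y.
  move=> zy se.
  have inU t : 0 <= t <= 1 -> U (y + t *: (s *: e)).
    move=> /andP[t0 t1]; apply: hr.
    have h1 : `|t *: (s *: e)| <= `|s| * `|e|.
      rewrite !normrZ (ger0_norm t0); set a := `|s| * `|e|.
      have a0 : 0 <= a by rewrite mulr_ge0.
      nra.
    have h2 := ler_normB (z - y) (t *: (s *: e)).
    have h3 : `|z - y| + `|t *: (s *: e)| < r / 2 + r / 2.
      by rewrite ltr_leD // (le_trans h1) // ltW.
    rewrite opprD addrA; apply: (le_lt_trans h2).
    by rewrite [r in _ < r]splitr.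
  apply: (seg_const dg inU) => t tI.
  by rewrite linearZ /= de ?scaler0 //; apply: inU.
have [e0|en0] := eqVneq e 0.
  exists 1 => [|s _]; first exact: ltr01.
  by rewrite e0 scaler0 addr0; split.
have ne0 : 0 < `|e| by rewrite normr_gt0.
exists (r / 2 / `|e|); first by rewrite divr_gt0.
move=> s hs.
have se : `|s| * `|e| < r / 2 by rewrite -ltr_pdivlMr.
have Uzs : U (z + s *: e).
  apply: hr; rewrite opprD addrA subrr add0r normrN normrZ.
  apply: (lt_trans se); rewrite ltr_pdivrMr ?ltr_pMr //.
  exact: ltr1n.
split; first exact: Uzs.
move=> w.
have E1 := deriveE w (dg _ Uzs).
have E2 := deriveE w (dg _ Uz).
apply: (etrans (esym E1)); apply: (etrans _ E2).
have Dz : derivable g z w by apply: diff_derivable; exact: dg.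
apply: cvg_lim; first exact: norm_hausdorff.
apply: (cvg_trans _ Dz); apply: near_eq_cvg.
have w1 : 0 < `|w| + 1 by rewrite ltr_wpDl.
have wp : 0 < r / 2 / (`|w| + 1) by rewrite !divr_gt0.
apply: filterS (dnbhs0_lt wp) => h hh /=.
have hw : `|z - (h *: w + z)| < r / 2.
  rewrite opprD addrCA subrr addr0 normrN normrZ.
  have hh' : `|h| * (`|w| + 1) < r / 2 by rewrite -ltr_pdivlMr.
  apply: (le_lt_trans _ hh'); apply: ler_wpM2l; [exact: normr_ge0 | rewrite lerDl; exact: ler01].
have zz : `|z - z| < r / 2 by rewrite subrr normr0.
rewrite /shift /= addrA (key _ _ hw se) (key _ _ zz se).
exact: erefl.
Qed.


Lemma loc_cst (U : set V) (g : V -> R) y : open U ->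
  (forall y, U y -> differentiable g y) ->
  (forall y w, U y -> 'd g y w = 0) -> U y ->
  exists2 r : R, 0 < r & forall w, `|y - w| < r -> U w /\ g w = g y.
Proof.
move=> oU dg d0 Uy.
have [r r0 hr] := open_ball oU Uy.
exists r; first exact: r0.
move=> w yw.
have inU t : 0 <= t <= 1 -> U (y + t *: (w - y)).
  move=> /andP[t0 t1]; apply: hr.
  rewrite opprD addrA subrr add0r normrN normrZ (ger0_norm t0).
  apply: (le_lt_trans _ yw); rewrite (distrC w y).
  have := normr_ge0 (y - w); set a := `|y - w|; move=> a0.
  nra.
split; first by apply: hr.
have := seg_const dg inU (fun t tI => d0 _ _ (inU t tI)).
by rewrite addrC subrK.
Qed.

Lemma open_sub (U : set V) (g : V -> R) (P : R -> Prop) : open U ->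
  (forall y, U y -> differentiable g y) ->
  (forall y w, U y -> 'd g y w = 0) ->
  open [set y | U y /\ P (g y)].
Proof.
move=> oU dg d0; rewrite openE => y [Uy Py].
have [r r0 hr] := loc_cst oU dg d0 Uy.
apply/nbhs_ballP; exists r; first exact: r0.
move=> w; rewrite -ball_normE /= => yw.
have [Uw ->] := hr w yw.
by split.
Qed.

Lemma conn_const (U : set V) (g : V -> R) : open U -> connected U ->
  (forall y, U y -> differentiable g y) ->
  (forall y w, U y -> 'd g y w = 0) ->
  exists c, forall z, U z -> g z = c.
Proof.
move=> oU cU dg d0.
have [[z0 Uz0]|U0] := pselect (exists z, U z); last first.
  by exists 0 => z Uz; exfalso; apply: U0; exists z.
exists (g z0).
pose B := [set y | U y /\ (fun v => v = g z0) (g y)].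
have BU : B = U.
  apply: cU.
  - by exists z0; split.
  - exists B; first exact: open_sub.
    by apply/seteqP; split => y; [move=> [Uy e]; split | move=> [_ []]].
  - exists (~` [set y | U y /\ (fun v => v <> g z0) (g y)]).
      by apply: open_closedC; exact: (open_sub (P := fun v => v <> g z0) oU dg d0).
    apply/seteqP; split => y.
      by move=> [Uy e]; split => //= -[_ ne].
    move=> [Uy /= H]; split => //; apply: contrapT => ne; apply: H; split; [exact: Uy | exact: ne].
move=> z Uz.
have : B z by rewrite BU.
by case.
Qed.

End Ana.

Section Poly.
Variable R : realFieldType.

Definition sigR (u v : R) (m : nat) : R :=
  \sum_(0 <= i < m.+1) u ^+ i * v ^+ (m - i).
Definition XF (u v : R) (ps : nat -> R) (J : nat) : R :=
  sigR u v (J - 2) - \sum_(1 <= i < J - 2) (i%:R * sigR u v (J - i - 3) * ps i).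

Definition sigP (u v : R) (m : nat) : {poly R} :=
  \sum_(0 <= i < m.+1) ('X + u%:P) ^+ i * (v ^+ (m - i))%:P.
Definition XP (u v : R) (ps : nat -> R) (J : nat) : {poly R} :=
  sigP u v (J - 2) - \sum_(1 <= i < J - 2) ((i%:R * ps i)%:P * sigP u v (J - i - 3)).

Lemma sigP_horner u v m s : (sigP u v m).[s] = sigR (s + u) v m.
Proof.
rewrite /sigP /sigR horner_sum; apply: eq_bigr => i _.
by rewrite hornerM hornerC horner_exp hornerD hornerX hornerC.
Qed.

Lemma XP_horner u v ps J s : (XP u v ps J).[s] = XF (s + u) v ps J.
Proof.
rewrite /XP /XF hornerD hornerN (sigP_horner u v (J-2) s) horner_sum; congr (_ - _).
apply: eq_bigr => i _; rewrite hornerM hornerC (sigP_horner u v _ s); ring.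
Qed.

Lemma size_sum_le (F : nat -> {poly R}) a b m :
  (forall i, (a <= i < b)%N -> (size (F i) <= m)%N) ->
  (size (\sum_(a <= i < b) F i)%R <= m)%N.
Proof.
move=> H; rewrite big_nat_cond; elim/big_ind: _.
- by rewrite size_poly0.
- by move=> p q hp hq; rewrite (leq_trans (size_polyD _ _)) // geq_max hp hq.
- by move=> i /andP[hi _]; apply: H.
Qed.

Lemma size_XaddC_exp (u : R) i : size (('X + u%:P) ^+ i) = i.+1.
Proof. by rewrite -[u]opprK polyCN size_exp_XsubC. Qed.

Lemma lead_XaddC_exp (u : R) i : lead_coef (('X + u%:P) ^+ i) = 1.
Proof. by apply/eqP; rewrite -monicE monic_exp // monicXaddC. Qed.

Lemma sigP_prop u v m : (size (sigP u v m) <= m.+1)%N /\ (sigP u v m)`_m = 1.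
Proof.
rewrite /sigP big_nat_recr //= subnn expr0 mulr1.
have hs : (size (\sum_(0 <= i < m) ('X + u%:P) ^+ i * (v ^+ (m - i))%:P)%R <= m)%N.
  apply: size_sum_le => i /andP[_ im].
  rewrite mulrC mul_polyC (leq_trans (size_scale_leq _ _)) //.
  by rewrite size_XaddC_exp.
split.
  by rewrite (leq_trans (size_polyD _ _)) // geq_max size_XaddC_exp leqnn (leq_trans hs).
rewrite coefD (nth_default _ hs) add0r.
by have := lead_XaddC_exp u m; rewrite /lead_coef size_XaddC_exp.
Qed.

Lemma XP_prop u v ps j :
  (size (XP u v ps (j + 3)) <= j.+2)%N /\ (XP u v ps (j + 3))`_j.+1 = 1.
Proof.
rewrite /XP.
have -> : (j + 3 - 2 = j.+1)%N by lia.
have [h1 h2] := sigP_prop u v j.+1.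
have hs : (size (\sum_(1 <= i < j.+1) ((i%:R * ps i)%:P * sigP u v (j + 3 - i - 3)))%R <= j.+1)%N.
  apply: size_sum_le => i /andP[i1 ij].
  rewrite mul_polyC (leq_trans (size_scale_leq _ _)) //.
  have [h3 _] := sigP_prop u v (j + 3 - i - 3).
  by apply: (leq_trans h3); lia.
split.
  by rewrite (leq_trans (size_polyD _ _)) // geq_max h1 size_polyN (leq_trans hs).
by rewrite coefB h2 (nth_default _ hs) subr0.
Qed.

Lemma lincomb0 (c0 : R) (c : nat -> R) (q : nat -> {poly R}) K :
  (forall j, (size (q j) <= j.+2)%N /\ (q j)`_j.+1 = 1) ->
  c0%:P + \sum_(0 <= j < K) c j *: q j = 0 ->
  c0 = 0 /\ forall j, (j < K)%N -> c j = 0.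
Proof.
move=> hq; elim: K => [|K IH].
  rewrite big_geq // addr0 => /eqP; rewrite polyC_eq0 => /eqP ->; split => // j.
rewrite big_nat_recr //= => H.
have cK : c K = 0.
  have := congr1 (fun p : {poly R} => p`_K.+1) H; rewrite /= coefD coefC /= coef0 add0r.
  rewrite coefD coef_sum coefZ (proj2 (hq K)) mulr1.
  rewrite big1_seq ?add0r // => j; rewrite mem_index_iota => /andP[_ jK].
  rewrite coefZ nth_default ?mulr0 //.
  by apply: (leq_trans (proj1 (hq j))).
move: H; rewrite cK scale0r addr0 => /IH [-> hc]; split => // j.
rewrite ltnS leq_eqVlt => /orP[/eqP -> //|]; exact: hc.
Qed.

Lemma poly_zero_near (P : {poly R}) d : 0 < d ->
  (forall s, `|s| < d -> P.[s] = 0) -> P = 0.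
Proof.
move=> d0 H.
pose e := d / ((size P)%:R + 1).
have e0 : 0 < e by rewrite divr_gt0 // ltr_wpDl.
apply: (@roots_geq_poly_eq0 _ P (mkseq (fun i => i%:R * e) (size P))).
- apply/allP => x /mapP [i]; rewrite mem_iota add0n => /andP[_ iP] ->.
  apply/rootP; apply: H; rewrite ger0_norm; last by rewrite mulr_ge0 // ltW.
  rewrite /e mulrA ltr_pdivrMr; last by rewrite ltr_wpDl.
  have hi : (i%:R : R) < (size P)%:R + 1 by rewrite natr1 ltr_nat ltnS ltnW.
  nra.
- apply: mkseq_uniq => i j /(mulIf (lt0r_neq0 e0)) /eqP.
  by rewrite eqr_nat => /eqP.
- by rewrite size_mkseq.
Qed.

End Poly.

Section Jet.
Variables (R : realType) (k N : nat).
Local Notation n := (ncoord k N).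
Local Notation M := (2 + N.+1 + N.+1)%N.
Ltac li := unfold ncoord in *; lia.

Definition zc (z : 'rV[R]_n) (i : nat) : R := z ord0 (@inord n.-1 i).
Definition dl (i : nat) : 'rV[R]_n := delta_mx ord0 (@inord n.-1 i).

Lemma nE : n.-1.+1 = n. Proof. by []. Qed.
Lemma nM : n = (M + k.-1)%N. Proof. by []. Qed.

Lemma zc_val z (i : 'I_n) m : m = i -> zc z m = z ord0 i.
Proof. by move->; rewrite /zc inord_val. Qed.

Lemma zc_inj A B : (forall i, (i < n)%N -> zc A i = zc B i) -> A = B.
Proof.
move=> H; apply/rowP => i.
have := H _ (ltn_ord i); rewrite /zc inord_val; exact.
Qed.

Lemma zc_add A B i : zc (A + B) i = zc A i + zc B i.
Proof. by rewrite /zc mxE. Qed.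
Lemma zc_scale c A i : zc (c *: A) i = c * zc A i.
Proof. by rewrite /zc mxE. Qed.

Lemma zc_dl c i : (0 < c < n)%N -> zc (dl c) i = (i == c)%:R.
Proof.
move=> hc; rewrite /zc /dl mxE eqxx /=; congr (_%:R).
rewrite -val_eqE /= /inord !val_insubd.
have -> : (c < n.-1.+1)%N by rewrite nE; lia.
case: ifP => hi //=.
have {}hi : (n <= i)%N by move: hi; rewrite nE; lia.
have -> : (i == c) = false by apply/eqP; lia.
by apply/eqP; lia.
Qed.

Lemma zc_shift z s c i : (0 < c < n)%N -> i != c -> zc (z + s *: dl c) i = zc z i.
Proof.
by move=> hc hi; rewrite zc_add zc_scale zc_dl // (negbTE hi) mulr0 addr0.
Qed.

Lemma zc_jproj (p : jet R) i : (i < n)%N -> zc (jproj k N p) i = Defs.coord k N p i.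
Proof. by move=> hi; rewrite /zc /jproj mxE inordK. Qed.

Definition jetof (z : 'rV[R]_n) (a b : R) : jet R :=
  mkJet (zc z 0) (zc z 1) (fun i => if (i <= N)%N then zc z (2 + i) else a)
        (fun i => if (i <= N)%N then zc z (2 + N.+1 + i) else b)
        (fun j => zc z (j - 3 + M)).

Lemma jproj_jetof z a b : jproj k N (jetof z a b) = z.
Proof.
apply: zc_inj => i hi; rewrite zc_jproj // /Defs.coord /jetof /=.
case: eqP => [->//|h0]; case: eqP => [->//|h1].
case: ifP => h2.
  rewrite ifT; last by lia.
  by congr (zc z _); lia.
case: ifP => h3.
  rewrite ifT; last by lia.
  by congr (zc z _); lia.
by congr (zc z _); lia.
Qed.


Lemma jproj_jline (p w : jet R) t : jproj k N (jline p w t) = jproj k N p + t *: jproj k N w.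
Proof.
apply: zc_inj => i hi; rewrite zc_add zc_scale !zc_jproj // /Defs.coord /jline /=.
by repeat case: ifP.
Qed.

Lemma XcE j (p q : jet R) : ju p 0 = ju q 0 -> jv p 0 = jv q 0 ->
  Defs.psi p =1 Defs.psi q -> Xc j p = Xc j q.
Proof.
move=> hu hv hp; rewrite /Xc /Defs.sigma hu hv; congr (_ - _).
by apply: eq_bigr => i _; rewrite hp.
Qed.

Lemma beq (a b c d : nat) : (a = b <-> c = d) -> (a == b) = (c == d).
Proof.
move=> h; case: (eqVneq a b) => [e|ne]; case: (eqVneq c d) => [e'|ne'] //.
- by move: ne'; rewrite -(proj1 h e) eqxx.
- by move: ne; rewrite (proj2 h e') eqxx.
Qed.

Lemma Xc_shift j z s c a b : (3 <= c < M)%N -> c != (2 + N.+1)%N ->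
  Xc j (jetof (z + s *: dl c) a b) = Xc j (jetof z a b).
Proof.
move=> hc hc'; apply: XcE => /=.
- by rewrite zc_shift //; li.
- by rewrite zc_shift //; li.
move=> i; rewrite /Defs.psi /=.
case: ifP => _; first by rewrite zc_shift //; li.
case: ifP => _; first by rewrite zc_shift //; li.
by rewrite zc_shift //; li.
Qed.

Lemma Xc_ab j z a b : Xc j (jetof z a b) = Xc j (jetof z 0 0).
Proof. by apply: XcE. Qed.

Lemma AX_shift z s c : (3 <= c < M)%N -> c != (2 + N.+1)%N ->
  jproj k N (Wxk k (jetof (z + s *: dl c) 0 0)) =
  jproj k N (Wxk k (jetof z 0 0)) + s *: dl c.-1.
Proof.
move=> hc hc'; apply: zc_inj => i hi.
rewrite zc_add zc_scale zc_dl; last by li.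
rewrite !zc_jproj // /Defs.coord /Wxk /= Xc_shift //.
rewrite /jetof /=.
case: eqP => [->|h0].
  by rewrite (_ : (0 == c.-1) = false) ?mulr0 ?addr0 //; apply/eqP; li.
case: eqP => [->|h1].
  by rewrite (_ : (1 == c.-1) = false) ?mulr0 ?addr0 //; apply/eqP; li.
case: ifP => h2.
  case: ifP => h3.
    rewrite zc_add zc_scale zc_dl; last by li.
    by rewrite (@beq _ _ i c.-1) //; li.
  by rewrite (_ : (i == c.-1) = false) ?mulr0 ?addr0 //; apply/eqP; li.
case: ifP => h4.
  case: ifP => h3.
    rewrite zc_add zc_scale zc_dl; last by li.
    by rewrite (@beq _ _ i c.-1) //; li.
  by rewrite (_ : (i == c.-1) = false) ?mulr0 ?addr0 //; apply/eqP; li.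
by rewrite (_ : (i == c.-1) = false) ?mulr0 ?addr0 //; apply/eqP; li.
Qed.


Lemma AX_ab z a b :
  jproj k N (Wxk k (jetof z a b)) =
  jproj k N (Wxk k (jetof z 0 0)) + a *: dl (2 + N) + b *: dl (2 + N.+1 + N).
Proof.
apply: zc_inj => i hi.
rewrite !zc_add !zc_scale !zc_dl; [|li|li].
rewrite !zc_jproj // /Defs.coord /Wxk /= (Xc_ab _ z a b).
rewrite /jetof /=.
case: eqP => [->|h0]; first by rewrite !mulr0 !addr0.
case: eqP => [->|h1]; first by rewrite !mulr0 !addr0.
case: ifP => h2.
  case: ifP => h3.
    rewrite (_ : (i == 2 + N)%N = false); last by apply/eqP; li.
    rewrite (_ : (i == 2 + N.+1 + N)%N = false); last by apply/eqP; li.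
    by rewrite !mulr0 !addr0.
  rewrite (_ : (i == 2 + N)%N = true); last by apply/eqP; li.
  rewrite (_ : (i == 2 + N.+1 + N)%N = false); last by apply/eqP; li.
  by rewrite mulr1 mulr0 add0r addr0.
case: ifP => h4.
  case: ifP => h3.
    rewrite (_ : (i == 2 + N)%N = false); last by apply/eqP; li.
    rewrite (_ : (i == 2 + N.+1 + N)%N = false); last by apply/eqP; li.
    by rewrite !mulr0 !addr0.
  rewrite (_ : (i == 2 + N)%N = false); last by apply/eqP; li.
  rewrite (_ : (i == 2 + N.+1 + N)%N = true); last by apply/eqP; li.
  by rewrite mulr1 mulr0 !add0r.
rewrite (_ : (i == 2 + N)%N = false); last by apply/eqP; li.
rewrite (_ : (i == 2 + N.+1 + N)%N = false); last by apply/eqP; li.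
by rewrite !mulr0 !addr0.
Qed.

Lemma decomp (g : 'rV[R]_n -> R) z A :
  'd g z A = \sum_(0 <= i < n) zc A i * 'd g z (dl i).
Proof.
rewrite {1}(row_sum_delta A) linear_sum big_mkord; apply: eq_bigr => i _.
by rewrite linearZ /= /zc /dl inord_val.
Qed.

Lemma decomp2 (g : 'rV[R]_n -> R) z A :
  (forall i, (2 <= i < M)%N -> 'd g z (dl i) = 0) ->
  'd g z A = zc A 0 * 'd g z (dl 0) + zc A 1 * 'd g z (dl 1) +
    \sum_(0 <= j < k.-1) zc A (j + M) * 'd g z (dl (j + M)).
Proof.
move=> H; have h2n : (2 <= n)%N by li.
have hMn : (M <= n)%N by li.
rewrite decomp (@big_cat_nat _ _ _ M) // [X in X + _ = _](@big_cat_nat _ _ _ 2) //=.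
rewrite big_ltn // big_nat1.
rewrite [X in _ + X + _ = _]big_nat_cond big1 ?addr0; last first.
  by move=> i /andP[hi _]; rewrite H // mulr0.
congr (_ + _); rewrite -{1}[M]add0n big_addn (_ : (n - M = k.-1)%N) //; li.
Qed.

Lemma AX_entry0 (p : jet R) : zc (jproj k N (Wxk k p)) 0 = 1.
Proof. by rewrite zc_jproj. Qed.
Lemma AX_entry1 (p : jet R) : zc (jproj k N (Wxk k p)) 1 = 0.
Proof. by rewrite zc_jproj //; li. Qed.
Lemma AX_entryM (p : jet R) j : (j < k.-1)%N ->
  zc (jproj k N (Wxk k p)) (j + M) = Xc (j + 3) p.
Proof.
move=> hj; rewrite zc_jproj; last by li.
rewrite /Defs.coord /Wxk /=.
rewrite (_ : (j + M == 0)%N = false); last by apply/eqP; li.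
rewrite (_ : (j + M == 1)%N = false); last by apply/eqP; li.
rewrite (_ : (j + M < 2 + N.+1)%N = false); last by li.
rewrite (_ : (j + M < M)%N = false); last by li.
rewrite (_ : (j + M - M + 3 = j + 3)%N); last by li.
by rewrite /in_psi_range (_ : (3 <= j + 3 <= k.+1)%N); last by li.
Qed.
Lemma AY_entry1 (p : jet R) : zc (jproj k N (Wyk k p)) 1 = 1.
Proof. by rewrite zc_jproj //; li. Qed.

End Jet.

Lemma sum_nat0 (V : zmodType) K (F : nat -> V) :
  (forall j, (j < K)%N -> F j = 0) -> \sum_(0 <= j < K) F j = 0.
Proof. by move=> H; rewrite big_nat_cond big1 // => j /andP[/andP[_ hj] _]; exact: H. Qed.

Lemma XcXF (R : realType) k N (z : 'rV[R]_(ncoord k N)) s j :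
  Xc j (jetof (z + s *: dl R k N 2) 0 0) =
  XF (zc z 2 + s) (zc z (2 + N.+1)) (Defs.psi (jetof z 0 0)) j.
Proof.
change (XF (ju (jetof (z + s *: dl R k N 2) 0 0) 0) (jv (jetof (z + s *: dl R k N 2) 0 0) 0)
  (Defs.psi (jetof (z + s *: dl R k N 2) 0 0)) j = XF (zc z 2 + s) (zc z (2 + N.+1)) (Defs.psi (jetof z 0 0)) j).
congr XF => /=.
- rewrite zc_add zc_scale zc_dl /=; last by unfold ncoord; lia.
  by rewrite mulr1.
- by rewrite zc_shift ?addn0 //; unfold ncoord; lia.
apply: funext => i; rewrite /Defs.psi /=.
case: ifP => _; first by rewrite zc_shift //; unfold ncoord; lia.
case: ifP => _; first by rewrite zc_shift //; unfold ncoord; lia.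
by rewrite zc_shift //; unfold ncoord; lia.
Qed.

Unset Implicit Arguments.

Theorem mainTheorem6 (R : realType) (k N : nat) (hk : (2 <= k)%N)
    (U : set 'rV[R]_(ncoord k N)) (g : 'rV[R]_(ncoord k N) -> R) :
  open U -> connected U ->
  (forall z, U z -> u0_of k N z != v0_of k N z) ->
  smooth_on U g ->
  (forall p : jet R, U (jproj k N p) ->
      Dxk k (fun q => g (jproj k N q)) p = 0) ->
  (forall p : jet R, U (jproj k N p) ->
      Dyk k (fun q => g (jproj k N q)) p = 0) ->
  exists c : R, forall z, U z -> g z = c.
Proof.
move=> oU cU _ sm HX HY.
have dg : forall y, U y -> differentiable g y := fun y Uy => sm [::] y Uy.
have hx : forall z a b, U z -> 'd g z (jproj k N (Wxk k (jetof z a b))) = 0.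
  move=> z a b Uz; have := HX (jetof z a b); rewrite jproj_jetof => /(_ Uz).
  rewrite /Dxk /vfield.
  have -> : (fun t => g (jproj k N (jline (jetof z a b) (Wxk k (jetof z a b)) t))) =
      (fun t => g (z + t *: jproj k N (Wxk k (jetof z a b)))).
    by apply: funext => t; rewrite jproj_jline jproj_jetof.
  rewrite derive1E derive_line scale0r addr0 deriveE //; exact: dg.
have hy : forall z, U z -> 'd g z (jproj k N (Wyk k (jetof z 0 0))) = 0.
  move=> z Uz; have := HY (jetof z 0 0); rewrite jproj_jetof => /(_ Uz).
  rewrite /Dyk /vfield.
  have -> : (fun t => g (jproj k N (jline (jetof z 0 0) (Wyk k (jetof z 0 0)) t))) =
      (fun t => g (z + t *: jproj k N (Wyk k (jetof z 0 0)))).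
    by apply: funext => t; rewrite jproj_jline jproj_jetof.
  rewrite derive1E derive_line scale0r addr0 deriveE //; exact: dg.
have hN : forall z, U z ->
    'd g z (dl R k N (2 + N)) = 0 /\ 'd g z (dl R k N (2 + N.+1 + N)) = 0.
  move=> z Uz; have h1 := hx z 1 0 Uz; have h2 := hx z 0 1 Uz.
  rewrite AX_ab !linearD !linearZ /= (hx z 0 0 Uz) in h1.
  rewrite AX_ab !linearD !linearZ /= (hx z 0 0 Uz) in h2.
  move: h1 h2; rewrite !scale0r !scale1r !add0r !addr0 => h1 h2.
  split; [exact: h1 | exact: h2].
have step : forall c, (3 <= c < 2 + N.+1 + N.+1)%N -> c != (2 + N.+1)%N ->
    (forall y, U y -> 'd g y (dl R k N c) = 0) ->
    forall z, U z -> 'd g z (dl R k N c.-1) = 0.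
  move=> c hc hc' hU z Uz.
  have [d d0 hd] := loc_const (e := dl R k N c) oU dg hU Uz.
  have s0 : 0 < d / 2 by rewrite divr_gt0.
  have hs : `|d / 2| < d by rewrite gtr0_norm //; lra.
  have [Uzs hL] := hd _ hs.
  have h0 := etrans (esym (hL _)) (hx _ 0 0 Uzs).
  rewrite (AX_shift _ _ hc hc') linearD linearZ /= (hx z 0 0 Uz) add0r in h0.
  move/eqP: h0; rewrite scaler_eq0 => /orP[/eqP h|/eqP h]; last exact: h.
  exfalso; move: s0; rewrite h ltxx; discriminate.
have hall : forall r, (r <= N)%N -> forall z, U z ->
    'd g z (dl R k N (2 + (N - r))) = 0 /\ 'd g z (dl R k N (2 + N.+1 + (N - r))) = 0.
  elim => [_|r IH hr].
    by move=> z Uz; rewrite subn0; exact: hN.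
  have IH' := IH (ltnW hr).
  move=> z Uz; split.
    have hc : (3 <= 2 + (N - r) < 2 + N.+1 + N.+1)%N by lia.
    have hc' : (2 + (N - r) != 2 + N.+1)%N by apply/eqP; lia.
    have := step _ hc hc' (fun y Uy => (IH' y Uy).1) z Uz.
    by rewrite (_ : ((2 + (N - r)).-1 = 2 + (N - r.+1))%N); last by lia.
  have hc : (3 <= 2 + N.+1 + (N - r) < 2 + N.+1 + N.+1)%N by lia.
  have hc' : (2 + N.+1 + (N - r) != 2 + N.+1)%N by apply/eqP; lia.
  have := step _ hc hc' (fun y Uy => (IH' y Uy).2) z Uz.
  by rewrite (_ : ((2 + N.+1 + (N - r)).-1 = 2 + N.+1 + (N - r.+1))%N); last by lia.
have huv0 : forall z, U z -> forall i, (2 <= i < 2 + N.+1 + N.+1)%N ->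
    'd g z (dl R k N i) = 0.
  move=> z Uz i hi; case: (ltnP i (2 + N.+1)) => hi2.
    have := (hall (N - (i - 2))%N (leq_subr _ _) z Uz).1.
    by rewrite (_ : (2 + (N - (N - (i - 2))) = i)%N); [move=> h; exact: h | lia].
  have := (hall (N - (i - 2 - N.+1))%N (leq_subr _ _) z Uz).2.
  by rewrite (_ : (2 + N.+1 + (N - (N - (i - 2 - N.+1))) = i)%N); [move=> h; exact: h | lia].
have hpsi : forall z, U z -> 'd g z (dl R k N 0) = 0 /\
    forall j, (j < k.-1)%N -> 'd g z (dl R k N (j + (2 + N.+1 + N.+1))) = 0.
  move=> z Uz.
  have h2 : (2 <= 2 < 2 + N.+1 + N.+1)%N by lia.
  have [d d0 hd] := loc_const (e := dl R k N 2) oU dg (fun y Uy => huv0 y Uy 2 h2) Uz.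
  pose c0 := 'd g z (dl R k N 0).
  pose c := fun j => 'd g z (dl R k N (j + (2 + N.+1 + N.+1))).
  pose u := zc z 2; pose v := zc z (2 + N.+1); pose ps := Defs.psi (jetof z 0 0).
  have P0 : c0%:P + \sum_(0 <= j < k.-1) c j *: XP u v ps (j + 3) = 0.
    apply: (poly_zero_near d0) => s hs.
    have [Uzs hL] := hd s hs.
    have h0 := etrans (esym (hL _)) (hx _ 0 0 Uzs).
    rewrite (decomp2 _ (huv0 z Uz)) AX_entry0 AX_entry1 mul0r addr0 mul1r in h0.
    rewrite hornerD hornerC horner_sum -[RHS]h0; congr (_ + _).
    apply: eq_big_nat => j hj.
    rewrite hornerZ XP_horner AX_entryM; last by lia.
    by rewrite XcXF mulrC (addrC s u).
  have [c00 cj0] := lincomb0 (q := fun j => XP u v ps (j + 3)) (fun j => XP_prop u v ps j) P0.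
  by split; [exact: c00 | move=> j hj; exact: cj0 j hj].
have hyy : forall z, U z -> 'd g z (dl R k N 1) = 0.
  move=> z Uz; have [c00 cj0] := hpsi z Uz.
  have := hy z Uz; rewrite (decomp2 _ (huv0 z Uz)) c00 mulr0 add0r AY_entry1 mul1r.
  rewrite sum_nat0 ?addr0; first exact: id.
  by move=> j hj; rewrite cj0 // mulr0.
have d0 : forall y w, U y -> 'd g y w = 0.
  move=> y w Uy; have [c00 cj0] := hpsi y Uy.
  rewrite (decomp2 _ (huv0 y Uy)) c00 (hyy y Uy) !mulr0 !add0r.
  by apply: sum_nat0 => j hj; rewrite cj0 // mulr0.
exact: (conn_const oU cU dg d0).
Qed.
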